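(* Let $\underline{R}=(R_1,\ldots,R_n)$ be an $n$-tuple of bounded operators on a Hilbert space $\mathcal{L}$. For $1\le i,j\le n$ let $\mathcal{K}_{ij}=\overline{\mathrm{span}}\{\underline{R}^\alpha(R_iR_j-R_jR_i)h: h\in\mathcal{L},\alpha\in\tilde\Lambda\}$ and $\mathcal{K}=\overline{\mathrm{span}}\bigcup_{i,j=1}^n\mathcal{K}_{ij}$. Then $\mathcal{L}^c(\underline{R})=\mathcal{K}^\perp$. Equivalently, $\mathcal{L}^c(\underline{R})=\{h\in\mathcal{L}:(R_i^*R_j^*-R_j^*R_i^* )(\underline{R}^\alpha)^*h=0\ \forall\,1\le i,j\le n,\ \alpha\in\tilde\Lambda\}$.
   Context: $\Lambda=\{1,\ldots,n\}$, $\tilde\Lambda=\bigcup_{m\ge0}\Lambda^m$ with $\Lambda^0=\{0\}$; $\underline{R}^\alpha=R_{\alpha_1}\cdots R_{\alpha_m}$ and $\underline{R}^0=I$. $\mathcal{L}^c(\underline{R})$ denotes the largest element of the collection of closed subspaces $\mathcal{M}\subseteq\mathcal{L}$ that are invariant under every $R_i^*$ and satisfy $R_i^*R_j^*h=R_j^*R_i^*h$ for all $h\in\mathcal{M}$ and all $i,j$ (this collection is closed under arbitrary intersections and closed spans of unions, hence has a largest element). *)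

(* Defs.v *)
(* Complex Hilbert spaces are set up
   by hand: a complete normed module over C = R[i] whose norm comes from an
   inner product (linear in the first argument). *)
From mathcomp Require Import all_boot all_order all_algebra complex.
From mathcomp Require Import all_classical all_reals all_analysis.
Set Implicit Arguments. Unset Strict Implicit. Unset Printing Implicit Defensive.
Import Order.TTheory GRing.Theory Num.Theory numFieldNormedType.Exports.
Local Open Scope ring_scope.
Local Open Scope classical_set_scope.

Section HilbertDefs.
Variables (R : realType) (V : completeNormedModType R[i]).

Definition is_inner_product (ip : V -> V -> R[i]) : Prop :=
  [/\ (forall (a : R[i]) (x y z : V), ip (a *: x + y) z = a * ip x z + ip y z),
      (forall x y : V, ip y x = (ip x y)^*)
    & (forall x : V, `|x| ^+ 2 = ip x x)].

Definition is_adjoint (ip : V -> V -> R[i]) (T S : V -> V) : Prop :=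
  forall x y : V, ip (T x) y = ip x (S y).

Definition bounded_op (T : V -> V) : Prop :=
  (forall (a : R[i]) (x y : V), T (a *: x + y) = a *: T x + T y) /\ continuous T.

Definition closed_subspace (M : set V) : Prop :=
  [/\ closed M, M 0 & forall (a : R[i]) (x y : V), M x -> M y -> M (a *: x + y)].

Definition span (S : set V) : set V :=
  [set x | exists (m : nat) (c : 'I_m -> R[i]) (v : 'I_m -> V),
             (forall k, S (v k)) /\ x = \sum_(k < m) c k *: v k].

Definition closed_span (S : set V) : set V := closure (span S).

Definition orth (ip : V -> V -> R[i]) (S : set V) : set V :=
  [set h | forall k, S k -> ip k h = 0].

(* R^alpha = R_{alpha_1} ... R_{alpha_m}, R^{[::]} = I;
   words alpha in tilde Lambda are sequences over 'I_n (the empty word is 0) *)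
Definition word_op (n : nat) (T : 'I_n -> V -> V) (alpha : seq 'I_n) (h : V) : V :=
  foldr (fun i x => T i x) h alpha.

(* closed subspaces M invariant under every R_i^* on which the R_i^* commute *)
Definition Lc_admissible (n : nat) (Rs : 'I_n -> V -> V) (M : set V) : Prop :=
  [/\ closed_subspace M,
      (forall i h, M h -> M (Rs i h))
    & (forall i j h, M h -> Rs i (Rs j h) = Rs j (Rs i h))].

Definition is_Lc (n : nat) (Rs : 'I_n -> V -> V) (M : set V) : Prop :=
  Lc_admissible Rs M /\ forall M', Lc_admissible Rs M' -> M' `<=` M.

Definition Kij (n : nat) (T : 'I_n -> V -> V) (i j : 'I_n) : set V :=
  closed_span [set x | exists (h : V) (alpha : seq 'I_n),
                 x = word_op T alpha (T i (T j h) - T j (T i h))].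

Definition Kall (n : nat) (T : 'I_n -> V -> V) : set V :=
  closed_span [set x | exists i j, Kij T i j x].

End HilbertDefs.

(* Main.v *)
Require Import Defs.
From mathcomp Require Import all_boot all_order all_algebra complex.
From mathcomp Require Import all_classical all_reals all_analysis.
From mathcomp Require Import ring.
Import Order.TTheory GRing.Theory Num.Theory numFieldTopology.Exports numFieldNormedType.Exports.
Local Open Scope ring_scope.
Local Open Scope classical_set_scope.

Lemma ip0l (R : realType) (V : completeNormedModType R[i]) (ip : V -> V -> R[i]) :
  is_inner_product ip -> forall z, ip 0 z = 0.
Proof.
case=> H1 _ _ z; have := H1 1 0 0 z.
rewrite scaler0 addr0 mul1r => /(congr1 (fun t => t - ip 0 z)).
by rewrite subrr addrK.
Qed.

Lemma ipDl (R : realType) (V : completeNormedModType R[i]) (ip : V -> V -> R[i]) :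
  is_inner_product ip -> forall x y z, ip (x + y) z = ip x z + ip y z.
Proof. by case=> H1 _ _ x y z; rewrite -[x]scale1r H1 mul1r scale1r. Qed.

Lemma ipZl (R : realType) (V : completeNormedModType R[i]) (ip : V -> V -> R[i]) :
  is_inner_product ip -> forall a x z, ip (a *: x) z = a * ip x z.
Proof.
move=> Hip a x z; have := Hip; case=> H1 _ _.
by rewrite -[a *: x]addr0 H1 ip0l // addr0.
Qed.

Lemma ipDr (R : realType) (V : completeNormedModType R[i]) (ip : V -> V -> R[i]) :
  is_inner_product ip -> forall x y z, ip z (x + y) = ip z x + ip z y.
Proof.
move=> Hip x y z; have := Hip; case=> _ H2 _.
by rewrite H2 ipDl // rmorphD /= -!H2.
Qed.

Lemma ipZr (R : realType) (V : completeNormedModType R[i]) (ip : V -> V -> R[i]) :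
  is_inner_product ip -> forall a x z, ip z (a *: x) = a^* * ip z x.
Proof.
move=> Hip a x z; have := Hip; case=> _ H2 _.
by rewrite H2 ipZl // rmorphM /= -!H2.
Qed.

Lemma ip0r (R : realType) (V : completeNormedModType R[i]) (ip : V -> V -> R[i]) :
  is_inner_product ip -> forall z, ip z 0 = 0.
Proof.
move=> Hip z; have := Hip; case=> _ H2 _.
by rewrite H2 ip0l // conjC0.
Qed.

Lemma polar_norm (R : realType) (V : completeNormedModType R[i]) (ip : V -> V -> R[i]) :
  is_inner_product ip -> forall c x h,
  `|x + c *: h| ^+ 2 = ip x x + c^* * ip x h + c * ip h x + c * c^* * ip h h.
Proof.
move=> Hip c x h; have := Hip; case=> _ _ H3.
rewrite H3 ipDl // !ipDr // !ipZl // !ipZr //.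
idtac.
ring.
Qed.

Lemma polarization (R : realType) (V : completeNormedModType R[i]) (ip : V -> V -> R[i]) :
  is_inner_product ip -> forall x h,
  ip x h = 4^-1 * ((`|x + 1 *: h| ^+ 2 - `|x + (-1) *: h| ^+ 2)
                + 'i * (`|x + 'i *: h| ^+ 2 - `|x + (- 'i) *: h| ^+ 2)).
Proof.
move=> Hip x h; rewrite !(polar_norm _ _ _ Hip) conjC1 conjCN1 rmorphN /= conjCi opprK.
have -> : forall A B C D : R[i],
   (A + 1 * B + 1 * C + 1 * 1 * D - (A + -1 * B + -1 * C + -1 * -1 * D) +
   'i * (A + - 'i * B + 'i * C + 'i * - 'i * D - (A + 'i * B + - 'i * C + - 'i * 'i * D)))
   = 4 * B + 2 * (C - B) * ('i * 'i + 1).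
  by move=> A B C D; ring.
rewrite -expr2 sqrCi addNr mulr0 addr0 mulrA mulVf ?mul1r //.
Qed.

Lemma ipl_cont (R : realType) (V : completeNormedModType R[i]) (ip : V -> V -> R[i]) :
  is_inner_product ip -> forall h, continuous ((fun x => ip x h) : V -> (R[i] : numFieldType)).
Proof.
move=> Hip h.
have Hn : forall c, continuous ((fun x : V => `|x + c *: h| ^+ 2) : V -> (R[i] : numFieldType)).
  move=> c x.
  have Hc : (`|y + c *: h| : (R[i] : numFieldType)) @[y --> x] --> (`|x + c *: h| : (R[i] : numFieldType)).
    by apply: cvg_norm; apply: cvgD; [exact: cvg_id | exact: cvg_cst].
  exact: (cvgM Hc Hc).
move=> x.
have -> : (fun x => ip x h) = (fun x => 4^-1 * ((`|x + 1 *: h| ^+ 2 - `|x + (-1) *: h| ^+ 2)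
                + 'i * (`|x + 'i *: h| ^+ 2 - `|x + (- 'i) *: h| ^+ 2))).
  by apply: funext => y; rewrite (polarization _ _ _ Hip).
rewrite /continuous_at /=.
apply: cvgM; first exact: cvg_cst.
apply: cvgD; first by apply: cvgB; apply: Hn.
apply: cvgM; first exact: cvg_cst.
by apply: cvgB; apply: Hn.
Qed.

Lemma ipl_closed (R : realType) (V : completeNormedModType R[i]) (ip : V -> V -> R[i]) :
  is_inner_product ip -> forall h, closed [set x | ip x h = 0].
Proof.
move=> Hip h.
have -> : [set x | ip x h = 0] =
   ((fun x => ip x h) : V -> (R[i] : numFieldType)) @^-1` [set 0].
  by [].
apply: preimage_closed.
  by move=> x _; apply: ipl_cont.
apply: (iffLR accessible_finite_set_closed).
  exact/hausdorff_accessible/norm_hausdorff.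
exact: finite_set1.
Qed.

Lemma orth_cspan (R : realType) (V : completeNormedModType R[i]) (ip : V -> V -> R[i]) :
  is_inner_product ip -> forall (G : set V) h,
  (forall g, G g -> ip g h = 0) -> forall k, closed_span G k -> ip k h = 0.
Proof.
move=> Hip G h HG k.
have Hsp : Defs.span G `<=` [set x | ip x h = 0].
  move=> x [m [c [v [Hv ->]]]] /=.
  apply: (big_ind (fun x => ip x h = 0)).
  - exact: ip0l.
  - by move=> a b Ha Hb; rewrite ipDl // Ha Hb addr0.
  - by move=> l _; rewrite ipZl // HG // mulr0.
rewrite /closed_span => Hk.
have := closureS Hsp Hk.
by rewrite -(proj1 (closure_id _) (ipl_closed _ _ _ Hip h)).
Qed.

Lemma sub_cspan (R : realType) (V : completeNormedModType R[i]) (G : set V) :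
  G `<=` closed_span G.
Proof.
move=> g Gg; apply: subset_closure.
exists 1%N, (fun _ => 1), (fun _ => g); split => //.
by rewrite big_ord1 scale1r.
Qed.

Lemma word_adj (R : realType) (V : completeNormedModType R[i]) (ip : V -> V -> R[i])
   (n : nat) (Rop Rs : 'I_n -> V -> V) :
  (forall i, is_adjoint ip (Rop i) (Rs i)) ->
  forall alpha x y, ip (word_op Rop alpha x) y = ip x (word_op Rs (rev alpha) y).
Proof.
move=> Had; elim=> [|a al IH] x y //=.
rewrite Had IH rev_cons /word_op foldr_rcons.
by [].
Qed.

Lemma ip_vec0 (R : realType) (V : completeNormedModType R[i]) (ip : V -> V -> R[i]) :
  is_inner_product ip -> forall w, (forall x, ip x w = 0) -> w = 0.
Proof.
case=> _ _ H3 w Hw; have := Hw w; rewrite -H3 => /eqP.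
by rewrite expf_eq0 /= normr_eq0 => /eqP.
Qed.

Lemma ipBl (R : realType) (V : completeNormedModType R[i]) (ip : V -> V -> R[i]) :
  is_inner_product ip -> forall x y z, ip (x - y) z = ip x z - ip y z.
Proof.
move=> Hip x y z; rewrite ipDl // -scaleN1r ipZl //.
by rewrite mulN1r.
Qed.

Lemma ipBr (R : realType) (V : completeNormedModType R[i]) (ip : V -> V -> R[i]) :
  is_inner_product ip -> forall x y z, ip z (x - y) = ip z x - ip z y.
Proof.
move=> Hip x y z; rewrite ipDr // -scaleN1r ipZr // conjCN1.
by rewrite mulN1r.
Qed.

Lemma gen_adj (R : realType) (V : completeNormedModType R[i]) (ip : V -> V -> R[i])
   (n : nat) (Rop Rs : 'I_n -> V -> V) :
  is_inner_product ip ->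
  (forall i, is_adjoint ip (Rop i) (Rs i)) ->
  forall i j alpha x y,
  ip (word_op Rop alpha (Rop i (Rop j x) - Rop j (Rop i x))) y =
  ip x (Rs j (Rs i (word_op Rs (rev alpha) y)) - Rs i (Rs j (word_op Rs (rev alpha) y))).
Proof.
move=> Hip Had i j alpha x y.
by rewrite (word_adj _ _ _ _ _ _ Had) ipBl // !Had ipBr.
Qed.

Theorem proposition4 (R : realType) (V : completeNormedModType R[i])
    (ip : V -> V -> R[i]) (n : nat) (Rop Rs : 'I_n -> V -> V) :
  is_inner_product ip ->
  (forall i, bounded_op (Rop i)) ->
  (forall i, is_adjoint ip (Rop i) (Rs i)) ->
  is_Lc Rs (orth ip (Kall Rop)) /\
  orth ip (Kall Rop) =
    [set h | forall (i j : 'I_n) (alpha : seq 'I_n),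
       Rs i (Rs j (word_op Rs (rev alpha) h))
       - Rs j (Rs i (word_op Rs (rev alpha) h)) = 0].
Proof.
move=> Hip _ Had.
have E : orth ip (Kall Rop) =
    [set h | forall (i j : 'I_n) (alpha : seq 'I_n),
       Rs i (Rs j (word_op Rs (rev alpha) h))
       - Rs j (Rs i (word_op Rs (rev alpha) h)) = 0].
  apply/seteqP; split => h /= Hh.
  - move=> i j alpha; apply: (ip_vec0 _ _ _ Hip) => x.
    rewrite -(gen_adj _ _ _ _ _ _ Hip Had); apply: Hh.
    apply: sub_cspan; exists j, i; apply: sub_cspan.
    by exists x, alpha.
  - move=> k; apply: (orth_cspan _ _ _ Hip) => g [i [j Hg]].
    rewrite /Kij in Hg; apply: (orth_cspan _ _ _ Hip _ _ _ _ Hg) => _ [x [alpha ->]].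
    by rewrite (gen_adj _ _ _ _ _ _ Hip Had) Hh ip0r.
split; last exact: E.
have Hcl : closed_subspace (orth ip (Kall Rop)).
  have := Hip; case=> _ H2 _.
  split.
  - have -> : orth ip (Kall Rop) = \bigcap_(k in Kall Rop) [set h | ip h k = 0].
      apply/seteqP; split => h /= Hh k Hk.
        by rewrite /= H2 Hh // conjC0.
      by rewrite H2; have := Hh k Hk; rewrite /= => ->; rewrite conjC0.
    by apply: closed_bigI => k _; exact: ipl_closed.
  - by move=> k _; rewrite ip0r.
  - by move=> a x y Hx Hy k Hk; rewrite ipDr // ipZr // Hx // Hy // mulr0 addr0.
rewrite E in Hcl *; split.
- split => //.
  + move=> i h Hh i' j' alpha.
    have := Hh i' j' (i :: alpha).
    by rewrite rev_cons /word_op foldr_rcons.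
  + move=> i j h Hh; apply/eqP; rewrite -subr_eq0; apply/eqP.
    exact: (Hh i j [::]).
- move=> M' [_ Hinv Hcom] h Hh i j alpha.
  have HW : forall s, M' (word_op Rs s h).
    by elim=> [|a s IH] //=; apply: Hinv.
  by rewrite Hcom ?subrr.
Qed.
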